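(* In the setting described in the context, $R_{t\infty}\ge R_{s\infty}$ (almost surely) for all $t\ge s\ge0$.
   Context: Let $(\Omega,\mathcal F,\mathbb P)$ be a probability space with a filtration $\{\mathcal F_t\}_{t\ge0}$ satisfying the usual conditions; (in)equalities between random variables hold a.s. A pricing kernel is an $\{\mathcal F_t\}$-adapted càdlàg semimartingale $\{\pi_t\}_{t\ge0}$ with (a) $\pi_t>0$, (b) $\mathbb E[\pi_t]<\infty$ for all $t\ge0$, (c) $\liminf_{t\to\infty}\mathbb E[\pi_t]=0$. Fix such a pricing kernel and set $P_{tT}=\pi_t^{-1}\mathbb E[\pi_T\mid\mathcal F_t]$ for $0\le t<T$. The exponential rate is $R_{tT}=-(T-t)^{-1}\ln P_{tT}$. For a family $\{A_x\}_{x\in\mathbb R^+}$ of $\mathcal F_t$-measurable extended-real random variables, $\limsup_{x\to\infty}A_x:=\operatorname{ess\,inf}_{x}\operatorname{ess\,sup}_{y\ge x}A_y$, with essential supremum/infimum taken among $\mathcal F_t$-measurable random variables. The long exponential rate is $R_{t\infty}=\limsup_{T\to\infty}R_{tT}$. *)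

(* Defs.v *)
From HB Require Import structures.
From mathcomp Require Import all_boot all_order all_algebra.
From mathcomp Require Import all_classical all_reals all_analysis.
From mathcomp Require Import measurable_realfun.
Set Implicit Arguments. Unset Strict Implicit. Unset Printing Implicit Defensive.
Import Order.TTheory GRing.Theory Num.Theory.
Import numFieldNormedType.Exports.
Local Open Scope classical_set_scope.
Local Open Scope ring_scope.

Section Defs.
Context (R : realType) (d : measure_display) (Omega : measurableType d)
        (P : probability Omega R).

Definition G_measurable (G : set (set Omega)) (f : Omega -> R) :=
  forall B : set R, measurable B -> G (f @^-1` B).
Definition G_emeasurable (G : set (set Omega)) (f : Omega -> \bar R) :=
  forall B : set (\bar R), measurable B -> G (f @^-1` B).

(* a filtration {F_t}_{t >= 0} of sub-sigma-algebras of the measurable sets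
   satisfying the usual conditions (right-continuity and completeness:
   F_0 contains every P-negligible set, hence so does F) *)
Definition usual_filtration (F : R -> set (set Omega)) :=
  [/\ forall t, 0 <= t -> sigma_algebra setT (F t),
      forall t, 0 <= t -> F t `<=` measurable,
      forall s t, 0 <= s -> s <= t -> F s `<=` F t,
      forall t, 0 <= t -> forall A, (forall u, t < u -> F u A) -> F t A
    & forall N, P.-negligible N -> F 0 N].

Definition adapted (F : R -> set (set Omega)) (X : R -> Omega -> R) :=
  forall t, 0 <= t -> G_measurable (F t) (X t).

Definition cadlag (X : R -> Omega -> R) :=
  forall w, (forall t, 0 <= t -> (X x w @[x --> t^'+]) --> X t w) /\
            (forall t, 0 < t -> cvg (X x w @[x --> t^'-])).

Definition stopping_time (F : R -> set (set Omega)) (tau : Omega -> \bar R) :=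
  (forall w, (0 <= tau w)%E) /\
  (forall t, 0 <= t -> F t [set w | (tau w <= t%:E)%E]).

Definition stopped (tau : Omega -> \bar R) (X : R -> Omega -> R) : R -> Omega -> R :=
  fun t w => X (match tau w with EFin r => Order.min t r | _ => t end) w.

Definition martingale (F : R -> set (set Omega)) (M : R -> Omega -> R) :=
  [/\ adapted F M,
      forall t, 0 <= t -> P.-integrable setT (EFin \o M t)
    & forall s t, 0 <= s -> s <= t -> forall A, F s A ->
        (\int[P]_(w in A) (M t w)%:E = \int[P]_(w in A) (M s w)%:E)%E].

Definition local_martingale (F : R -> set (set Omega)) (M : R -> Omega -> R) :=
  [/\ adapted F M, cadlag M, (forall w, M 0 w = 0) &
    exists tau : nat -> Omega -> \bar R,
      [/\ forall n, stopping_time F (tau n),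
          forall n w, (tau n w <= tau n.+1 w)%E,
          (\forall w \ae P, (tau n w @[n --> \oo] --> +oo%E))
        & forall n, martingale F (stopped (tau n) M)]].

Definition finite_variation_process (F : R -> set (set Omega)) (A : R -> Omega -> R) :=
  [/\ adapted F A, cadlag A, (forall w, A 0 w = 0) &
      forall w t, 0 <= t -> bounded_variation 0 t (fun u => A u w)].

Definition semimartingale (F : R -> set (set Omega)) (X : R -> Omega -> R) :=
  [/\ adapted F X, cadlag X &
    exists M A, [/\ local_martingale F M, finite_variation_process F A &
      forall t w, 0 <= t -> X t w = X 0 w + M t w + A t w]].

Definition expectation (X : Omega -> R) : \bar R := (\int[P]_w (X w)%:E)%E.

Definition pricing_kernel (F : R -> set (set Omega)) (pi : R -> Omega -> R) :=
  [/\ semimartingale F pi,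
      forall t w, 0 <= t -> 0 < pi t w,
      forall t, 0 <= t -> P.-integrable setT (EFin \o pi t)
    & ereal_sup [set ereal_inf [set expectation (pi u) | u in [set u | M <= u /\ 0 <= u]]
                 | M in [set: R]] = 0%E].

Definition cond_exp_version (G : set (set Omega)) (X Y : Omega -> R) :=
  [/\ G_measurable G Y, P.-integrable setT (EFin \o Y) &
      forall A, G A -> (\int[P]_(w in A) (Y w)%:E = \int[P]_(w in A) (X w)%:E)%E].

Definition is_ess_sup (G : set (set Omega)) (I : set R) (A : R -> Omega -> \bar R)
    (Y : Omega -> \bar R) :=
  [/\ G_emeasurable G Y,
      forall y, I y -> \forall w \ae P, (A y w <= Y w)%E
    & forall Z, G_emeasurable G Z -> (forall y, I y -> \forall w \ae P, (A y w <= Z w)%E) ->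
        \forall w \ae P, (Y w <= Z w)%E].

Definition is_ess_inf (G : set (set Omega)) (I : set R) (A : R -> Omega -> \bar R)
    (Y : Omega -> \bar R) :=
  [/\ G_emeasurable G Y,
      forall y, I y -> \forall w \ae P, (Y w <= A y w)%E
    & forall Z, G_emeasurable G Z -> (forall y, I y -> \forall w \ae P, (Z w <= A y w)%E) ->
        \forall w \ae P, (Z w <= Y w)%E].

(* limsup_{x -> oo} A_x := ess inf_{x in R^+} ess sup_{y >= x} A_y, where the
   family is only defined for indices in D *)
Definition is_ess_limsup (G : set (set Omega)) (D : set R) (A : R -> Omega -> \bar R)
    (L : Omega -> \bar R) :=
  exists S : R -> Omega -> \bar R,
    (forall x, 0 <= x -> is_ess_sup G (D `&` [set y | x <= y]) A (S x)) /\
    is_ess_inf G [set x | 0 <= x] S L.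

(* exponential rate R_{tT} = -(T-t)^{-1} ln P_{tT}, with P_{tT} = pi_t^{-1} C,
   C a version of E[pi_T | F_t] *)
Definition exp_rate (pi : R -> Omega -> R) (C : Omega -> R) (t T : R) : Omega -> R :=
  fun w => - (T - t)^-1 * ln ((pi t w)^-1 * C w).

Definition long_rate (F : R -> set (set Omega)) (pi : R -> Omega -> R)
    (C : R -> R -> Omega -> R) (t : R) (L : Omega -> \bar R) :=
  is_ess_limsup (F t) [set T | t < T] (fun T w => (exp_rate pi (C t T) t T w)%:E) L.

End Defs.

(* Main.v *)
Require Import Defs.
From HB Require Import structures.
From mathcomp Require Import all_boot all_order all_algebra.
From mathcomp Require Import all_classical all_reals all_analysis.
From mathcomp Require Import measurable_realfun.
From mathcomp Require Import lra.
Set Implicit Arguments. Unset Strict Implicit. Unset Printing Implicit Defensive.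
Import Order.TTheory GRing.Theory Num.Theory.
Import numFieldNormedType.Exports.
Local Open Scope classical_set_scope.
Local Open Scope ring_scope.


Definition subsig d (T : measurableType d) (G : set (set T))
  (HG : sigma_algebra setT G) : Type := T.

Section SubSig.
Context d (T : measurableType d) (G : set (set T)) (HG : sigma_algebra setT G).
Local Notation subsig := (subsig HG).
HB.instance Definition _ := Pointed.on subsig.
Let G0 : G set0. Proof. by case: HG. Qed.
Let GC : forall A, G A -> G (~` A).
Proof. by case: HG => _ h _ A /h; rewrite setTD. Qed.
Let GU : forall F : (set subsig)^nat, (forall i, G (F i)) -> G (\bigcup_i F i).
Proof. by case: HG. Qed.
HB.instance Definition _ := @isMeasurable.Build default_measure_display subsig G G0 GC GU.

Lemma Gmeas_sub (R : realType) (f : T -> R) :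
  G_measurable G f -> measurable_fun [set: subsig] (f : subsig -> R).
Proof. by move=> Gf _ B mB; rewrite setTI; exact: Gf. Qed.

Lemma sub_Gmeas (R : realType) (f : T -> R) :
  measurable_fun [set: subsig] (f : subsig -> R) -> G_measurable G f.
Proof. by move=> mf B mB; rewrite -[_ @^-1` _]setTI; exact: mf. Qed.

Lemma Gemeas_sub (R : realType) (f : T -> \bar R) :
  G_emeasurable G f -> measurable_fun [set: subsig] (f : subsig -> \bar R).
Proof. by move=> Gf _ B mB; rewrite setTI; exact: Gf. Qed.

Lemma subsig_meas (A : set subsig) : measurable A -> G A.
Proof. by []. Qed.

Section hahn.
Context (R : realType) (HGm : G `<=` measurable) (nu : {charge set T -> \bar R}).

Definition subnu (A : set subsig) : \bar R := nu A.
Let subnu0 : subnu set0 = 0%E. Proof. exact: charge0. Qed.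
Let subnu_fin A : G A -> subnu A \is a fin_num.
Proof. by move=> /HGm mA; exact: fin_num_measure. Qed.
Let subnu_sa : semi_sigma_additive subnu.
Proof. move=> F mF tF mU; apply: charge_semi_sigma_additive => //.
  by move=> i; apply: HGm; exact: mF. exact: HGm. Qed.
HB.instance Definition _ := isCharge.Build _ subsig R subnu subnu0 subnu_fin subnu_sa.

Lemma sub_hahn : exists W, [/\ G W,
  (forall A, G A -> A `<=` W -> (0 <= nu A)%E) &
  (forall A, G A -> A `<=` ~` W -> (nu A <= 0)%E)].
Proof.
have [P [N [[mP posP] [mN negN] PN PN0]]] := Hahn_decomposition subnu.
exists P; split.
- exact: mP.
- by move=> A GA AP; have := posP A GA AP.
- move=> A GA AW; apply: (negN A GA) => x /AW Px.
  have : (P `|` N) x by rewrite PN.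
  by case.
Qed.
End hahn.
End SubSig.

Lemma rate_lt (R : realType) (c L a : R) : 0 < c -> (- c^-1 * L < a) = (- c * a < L).
Proof. by move=> c0; rewrite mulNr ltrNl ltr_pdivlMl // mulrN mulNr. Qed.
Lemma alg1 (R : realType) (c p y a : R) : 0 < c -> 0 < p -> expR (- c * a) * p < y ->
  - c^-1 * ln (p^-1 * y) < a.
Proof.
move=> c0 p0 h.
have e0 := expR_gt0 (- c * a).
have hy : expR (- c * a) < p^-1 * y by rewrite [p^-1 * y]mulrC ltr_pdivlMr.
have hy0 : 0 < p^-1 * y by exact: lt_trans hy.
by rewrite rate_lt // -ltr_expR lnK // posrE.
Qed.
Lemma alg2 (R : realType) (c p y a : R) : 0 < c -> 0 < p -> 0 < y ->
  - c^-1 * ln (p^-1 * y) < a -> expR (- c * a) * p < y.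
Proof.
move=> c0 p0 y0; rewrite rate_lt // => h.
have hy0 : 0 < p^-1 * y by rewrite mulr_gt0 // invr_gt0.
have : expR (- c * a) < p^-1 * y by rewrite -(lnK hy0) ltr_expR.
by rewrite [p^-1 * y]mulrC ltr_pdivlMr.
Qed.

Section Aux.
Context (R : realType) d (Omega : measurableType d) (P : probability Omega R).
Local Open Scope ereal_scope.

Lemma Gmeas_mfun (G : set (set Omega)) (f : Omega -> R) :
  G `<=` measurable -> G_measurable G f -> measurable_fun setT f.
Proof. by move=> GM Gf _ B mB; rewrite setTI; exact/GM/Gf. Qed.

Lemma pos_int0 (A : set Omega) (f : Omega -> R) : measurable A ->
  measurable_fun A (EFin \o f) ->
  (forall w, A w -> (0 < f w)%R) -> \int[P]_(w in A) (f w)%:E <= 0 -> P A = 0.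
Proof.
move=> mA mf fpos hle.
have h0 : \int[P]_(w in A) (f w)%:E = 0.
  apply/eqP; rewrite eq_le hle /=; apply: integral_ge0 => w Aw.
  by rewrite lee_fin ltW // fpos.
have : \int[P]_(w in A) `|(EFin \o f) w| = 0.
  rewrite -h0; apply: eq_integral => w /set_mem Aw /=. idtac.
  by rewrite ger0_norm // ltW // fpos.
move/(ae_eq_integral_abs P mA mf) => [N [mN N0 sub]].
apply/eqP; rewrite eq_le measure_ge0 andbT -N0; apply: le_measure; rewrite ?inE //.
move=> w Aw; apply: sub => /= /(_ Aw) [] H.
by have := fpos w Aw; rewrite H ltxx.
Qed.

End Aux.



Section Main.
Context (R : realType) d (Omega : measurableType d) (P : probability Omega R)
  (F : R -> set (set Omega)) (pi : R -> Omega -> R) (C : R -> R -> Omega -> R).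
Context (hF : usual_filtration P F) (hpk : pricing_kernel P F pi)
  (hC : forall t T, 0 <= t -> t < T -> cond_exp_version P (F t) (pi T) (C t T)).

Lemma FS t : 0 <= t -> sigma_algebra setT (F t).
Proof. by case: hF => h _ _ _ _; exact: h. Qed.
Lemma FM t : 0 <= t -> F t `<=` measurable.
Proof. by case: hF => _ h _ _ _; exact: h. Qed.
Lemma Fmono s t : 0 <= s -> s <= t -> F s `<=` F t.
Proof. by case: hF => _ _ h _ _; exact: h. Qed.
Lemma FI t A B : 0 <= t -> F t A -> F t B -> F t (A `&` B).
Proof. move=> t0 hA hB; have := @measurableI _ (subsig (FS t0)) A B hA hB. exact. Qed.
Lemma FD t A B : 0 <= t -> F t A -> F t B -> F t (A `\` B).
Proof. move=> t0 hA hB; have := @measurableD _ (subsig (FS t0)) A B hA hB. exact. Qed.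

Lemma pi_pos t w : 0 <= t -> 0 < pi t w.
Proof. by case: hpk => _ h _ _ t0; exact: h. Qed.
Lemma pi_int t : 0 <= t -> P.-integrable setT (EFin \o pi t).
Proof. by case: hpk => _ _ h _; exact: h. Qed.
Lemma pi_G t : 0 <= t -> G_measurable (F t) (pi t).
Proof. by case: hpk => -[h _ _] _ _ _; exact: h. Qed.
Lemma pi_intS t D : 0 <= t -> measurable D -> P.-integrable D (EFin \o pi t).
Proof. by move=> t0 mD; apply: integrableS (pi_int t0) => //. Qed.

Lemma C_G t T : 0 <= t -> t < T -> G_measurable (F t) (C t T).
Proof. by move=> t0 tT; case: (hC t0 tT). Qed.
Lemma C_intS t T D : 0 <= t -> t < T -> measurable D -> P.-integrable D (EFin \o C t T).
Proof. by move=> t0 tT mD; case: (hC t0 tT) => _ h _; apply: integrableS h => //. Qed.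
Lemma C_eq t T A : 0 <= t -> t < T -> F t A ->
  (\int[P]_(w in A) (C t T w)%:E = \int[P]_(w in A) (pi T w)%:E)%E.
Proof. by move=> t0 tT hA; case: (hC t0 tT) => _ _ h; exact: h. Qed.

Lemma C_pos t T : 0 <= t -> t < T -> \forall w \ae P, 0 < C t T w.
Proof.
move=> t0 tT; have T0 : 0 <= T by apply: le_trans (ltW tT).
set A0 := C t T @^-1` `]-oo, 0].
have hA0 : F t A0 by apply: C_G => //; exact: measurable_itv.
have mA0 := FM t0 hA0.
have P0 : P A0 = 0%E.
  apply: (pos_int0 mA0 (f := pi T)).
  - exact: measurable_int (pi_intS T0 mA0).
  - by move=> w _; exact: pi_pos.
  rewrite -(C_eq t0 tT hA0).
  have := le_integral mA0 (C_intS t0 tT mA0) (integrable0 P A0).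
  rewrite integral0; apply => w /set_mem.
  by rewrite /A0 /= in_itv /= lee_fin.
exists A0; split => // w /= /negP; rewrite -leNgt => h.
by rewrite /A0 /= in_itv.
Qed.

Lemma DF (s T k : R) (V : set Omega) : 0 <= s -> s < T -> F s V ->
  F s (V `&` [set w | C s T w <= k * pi s w]).
Proof.
move=> s0 sT hV.
have -> : V `&` [set w | C s T w <= k * pi s w] =
    V `&` ((fun w => C s T w - k * pi s w) @^-1` `]-oo, 0]).
  by apply/seteqP; split => w /= [Vw h]; split => //; move: h; rewrite in_itv /= subr_le0.
apply: FI => //.
have mf : measurable_fun [set: subsig (FS s0)] (fun w => C s T w - k * pi s w).
  apply: measurable_funB; first exact: Gmeas_sub (C_G s0 sT).
  apply: measurable_funM => //; exact: Gmeas_sub (pi_G s0).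
exact: sub_Gmeas mf _ (measurable_itv _).
Qed.

Lemma Dnull (s t T q q'' dl : R) (B V : set Omega) :
  0 <= s -> s < t -> t < T -> F t B -> F s V -> 0 < dl ->
  (forall A, F s A -> A `<=` V ->
     (dl%:E * \int[P]_(w in A) (pi s w)%:E <= \int[P]_(w in A `&` B) (pi t w)%:E)%E) ->
  (\forall w \ae P, B w -> expR (- (T - t) * q) * pi t w <= C t T w) ->
  expR (- (T - s) * q'') < dl * expR (- (T - t) * q) ->
  P (V `&` [set w | C s T w <= expR (- (T - s) * q'') * pi s w]) = 0%E.
Proof.
move=> s0 st tT hB hV dl0 hahn hae hlt.
have t0 : 0 <= t by apply: le_trans (ltW st).
have T0 : 0 <= T by apply: le_trans (ltW tT).
have sT : s < T by apply: lt_trans tT.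
set k := expR (- (T - s) * q''); set m := expR (- (T - t) * q).
have k0 : 0 < k := expR_gt0 _.
have m0 : 0 < m := expR_gt0 _.
set D := V `&` _.
have hD : F s D by apply: DF.
have hDt : F t D := Fmono s0 (ltW st) hD.
have mD := FM s0 hD.
have hDB : F t (D `&` B) := FI t0 hDt hB.
have mDB := FM t0 hDB.
have h1 : (\int[P]_(w in D) (C s T w)%:E <= k%:E * \int[P]_(w in D) (pi s w)%:E)%E.
  rewrite -integralZl //; last exact: pi_intS.
  apply: le_integral => //; first exact: C_intS.
    exact: integrableZl (pi_intS s0 mD).
  by move=> w /set_mem [_ /= h]; rewrite lee_fin.
have h2 := C_eq s0 sT hD.
have h3 : (\int[P]_(w in D `&` B) (pi T w)%:E <= \int[P]_(w in D) (pi T w)%:E)%E.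
  apply: ge0_subset_integral => //.
  - exact: measurable_int (pi_intS T0 mD).
  - by move=> w _; rewrite lee_fin ltW // pi_pos.
have h4 := C_eq t0 tT hDB.
have h5 : (m%:E * \int[P]_(w in D `&` B) (pi t w)%:E <= \int[P]_(w in D `&` B) (C t T w)%:E)%E.
  case: hae => N [mN N0 sub].
  rewrite -integralZl //; last exact: pi_intS.
  rewrite (negligible_integral mN mDB (integrableZl _ _ (pi_intS t0 mDB))) //.
  rewrite [leRHS](negligible_integral mN mDB (C_intS t0 tT mDB)) //.
  apply: le_integral; first exact: measurableD.
  - apply: integrableZl => //; first exact: measurableD. exact: pi_intS t0 (measurableD mDB mN).
  - exact: C_intS (measurableD mDB mN).
  move=> w /set_mem [[_ Bw] Nw] /=; rewrite lee_fin.
  apply: contrapT => hn; apply: Nw; apply: sub => /= h; apply: hn; exact: h.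
have h6 := hahn D hD (@subIsetl _ _ _).
have hI := integrable_fin_num mD (pi_intS s0 mD).
have hJ := integrable_fin_num mDB (pi_intS t0 mDB).
have I0 : (0 <= \int[P]_(w in D) (pi s w)%:E)%E.
  by apply: integral_ge0 => w _; rewrite lee_fin ltW // pi_pos.
have J0 : (0 <= \int[P]_(w in D `&` B) (pi t w)%:E)%E.
  by apply: integral_ge0 => w _; rewrite lee_fin ltW // pi_pos.
have key : (m%:E * \int[P]_(w in D `&` B) (pi t w)%:E <= k%:E * \int[P]_(w in D) (pi s w)%:E)%E.
  apply: le_trans h5 _; rewrite h4; apply: le_trans h3 _; rewrite -h2; exact: h1.
move: key h6 I0 J0; rewrite -(fineK hI) -(fineK hJ) -!EFinM !lee_fin.
set i := fine _; set j := fine _ => key h6 I0 J0.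
have i0 : j <= 0.
  have hlt2 : k < dl * m by []. move: key h6 I0 J0 hlt2 m0 k0 dl0; clearbody k m i j; move=> *; nra.
apply: (pos_int0 mD (f := pi s)).
- exact: measurable_int (pi_intS s0 mD).
- by move=> w _; exact: pi_pos.
by rewrite -(fineK hI) lee_fin.
Qed.

Lemma FU t A B : 0 <= t -> F t A -> F t B -> F t (A `|` B).
Proof. move=> t0 hA hB; have := @measurableU _ (subsig (FS t0)) A B hA hB. exact. Qed.
Lemma FC t A : 0 <= t -> F t A -> F t (~` A).
Proof. move=> t0 hA; have := @measurableC _ (subsig (FS t0)) A hA. exact. Qed.
Lemma FT t : 0 <= t -> F t setT.
Proof. move=> t0; have := @measurableT _ (subsig (FS t0)). exact. Qed.
Lemma F0 t : 0 <= t -> F t set0.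
Proof. move=> t0; have := @measurable0 _ (subsig (FS t0)). exact. Qed.

Lemma Vnull (s t x q q' dl : R) (Ls X : Omega -> \bar R) (B V : set Omega) :
  0 <= s -> s < t -> 0 <= x -> q < q' -> 0 < dl ->
  long_rate P F pi C s Ls ->
  (forall T, t < T -> x <= T ->
     \forall w \ae P, ((exp_rate pi (C t T) t T w)%:E <= X w)%E) ->
  F t B -> (forall w, B w -> (X w < q%:E)%E) ->
  F s V -> (forall w, V w -> (q'%:E < Ls w)%E) ->
  (forall A, F s A -> A `<=` V ->
     (dl%:E * \int[P]_(w in A) (pi s w)%:E <= \int[P]_(w in A `&` B) (pi t w)%:E)%E) ->
  P V = 0%E.
Proof.
move=> s0 st x0 qq' dl0 [Ss [hSs hinf]] hX hB hBX hV hVL hahn.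
have t0 : 0 <= t by apply: le_trans (ltW st).
set q'' := (q + q') / 2.
have qq'' : q < q'' by rewrite /q''; lra.
have q''q' : q'' < q' by rewrite /q''; lra.
set a := (s * q'' - t * q - ln dl) / (q'' - q).
set x' := Num.max (Num.max x (t + 1)) (Num.max (a + 1) 0).
have x'0 : 0 <= x' by rewrite /x' !le_max lexx !orbT.
have hx'x : x <= x' by rewrite /x' !le_max lexx.
have hx't : t + 1 <= x' by rewrite /x' !le_max lexx !orbT.
have hx'a : a + 1 <= x' by rewrite /x' !le_max lexx !orbT.
have hT : forall T, x' <= T ->
    P (V `&` [set w | C s T w <= expR (- (T - s) * q'') * pi s w]) = 0%E.
  move=> T x'T.
  have tT : t < T by apply: lt_le_trans x'T; apply: lt_le_trans hx't; lra.
  apply: (Dnull s0 st tT hB hV dl0 hahn).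
  - have := hX T tT (le_trans hx'x x'T).
    have := C_pos t0 tT.
    apply: filterS2 => w Cpos hR Bw.
    apply: ltW; apply: alg2 => //; first by rewrite subr_gt0.
    + exact: pi_pos.
    + by rewrite -lte_fin; apply: le_lt_trans hR (hBX w Bw).
  - have aT : a < T by apply: lt_le_trans x'T; apply: lt_le_trans hx'a; lra.
    have hq : 0 < q'' - q by rewrite subr_gt0.
    move: aT; rewrite /a ltr_pdivrMr // => aT.
    rewrite -[X in _ < X * _](lnK dl0) -expRD ltr_expR.
    nra.
case: (hSs x' x'0) => mS ubS leastS.
pose Z := fun w => if w \in V then q''%:E else Ss x' w.
have mZ : G_emeasurable (F s) Z.
  move=> B' mB'.
  have -> : Z @^-1` B' = (V `&` [set _ : Omega | B' q''%:E]) `|` (~` V `&` (Ss x' @^-1` B')).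
    apply/seteqP; split => w; rewrite /Z /=.
      case: ifPn => [/set_mem Vw h|Vw h]; first by left.
      by right; split => // Vw'; move: Vw; rewrite (mem_set Vw').
    case => -[Vw h]; case: ifPn => // hw.
      by move: hw; rewrite (mem_set Vw).
    by exfalso; apply: Vw; exact: set_mem hw.
  apply: FU => //.
    apply: FI => //; have [h|h] := pselect (B' q''%:E).
      have -> : [set _ : Omega | B' q''%:E] = setT by apply/seteqP; split => w //=.
      exact: FT.
    have -> : [set _ : Omega | B' q''%:E] = set0 by apply/seteqP; split => w //=.
    exact: F0.
  by apply: FI => //; [exact: FC | exact: mS].
have ubZ : forall y, ([set T | s < T] `&` [set y | x' <= y]) y ->
    \forall w \ae P, ((exp_rate pi (C s y) s y w)%:E <= Z w)%E.
  move=> y [/= sy x'y].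
  have hD := hT y x'y.
  have aeD : \forall w \ae P,
      ~ (V `&` [set w | C s y w <= expR (- (y - s) * q'') * pi s w]) w.
    exists (V `&` [set w | C s y w <= expR (- (y - s) * q'') * pi s w]); split => //.
      by apply: (FM s0); apply: DF.
    by move=> w /= /contrapT.
  have := ubS y (conj sy x'y).
  apply: filterS2 aeD => w hn hle; rewrite /Z.
  case: ifPn => // /set_mem Vw.
  rewrite lee_fin; apply: ltW; apply: alg1; first by rewrite subr_gt0.
    exact: pi_pos.
  by rewrite ltNge; apply/negP => h; apply: hn.
have hSZ := leastS Z mZ ubZ.
case: hinf => _ lbinf _.
have hLS := lbinf x' x'0.
have aeV : \forall w \ae P, ~ V w.
  apply: filterS2 hSZ hLS => w h1 h2 Vw.
  move: h1; rewrite /Z ifT; last exact: mem_set.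
  move=> h1; have := le_trans h2 h1; have := hVL w Vw.
  move=> h3 h4; have := lt_le_trans h3 h4; rewrite lte_fin; lra.
case: aeV => N [mN N0 sub].
have mV := FM s0 hV.
apply/eqP; rewrite eq_le measure_ge0 andbT -N0; apply: le_measure; rewrite ?inE //.
by move=> w Vw; apply: sub.
Qed.

Lemma small_le0 (e c : R) : 0 <= c -> (forall n : nat, e <= n.+1%:R^-1 * c) -> e <= 0.
Proof.
move=> c0 h; rewrite leNgt; apply/negP => e0.
have ce0 : 0 <= c / e by rewrite divr_ge0 // ltW.
have hb := archi_boundP ce0.
set n := Num.Def.archi_bound _ in hb.
have := h n; rewrite mulrC ler_pdivlMr ?ltr0Sn // -natr1 => h1.
have h2 : c < n%:R * e by rewrite -ltr_pdivrMr.
nra.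
Qed.


Lemma mainq (s t x q q' : R) (Ls X : Omega -> \bar R) :
  0 <= s -> s < t -> 0 <= x -> q < q' ->
  long_rate P F pi C s Ls ->
  G_emeasurable (F t) X ->
  (forall T, t < T -> x <= T ->
     \forall w \ae P, ((exp_rate pi (C t T) t T w)%:E <= X w)%E) ->
  \forall w \ae P, ~ ((X w < q%:E)%E /\ (q'%:E < Ls w)%E).
Proof.
move=> s0 st x0 qq' hLs mX hX.
have t0 : 0 <= t by apply: le_trans (ltW st).
have [Ss [_ [mLs _ _]]] := hLs.
set B := X @^-1` `]-oo, q%:E[.
have hB : F t B := mX _ (emeasurable_itv _).
set E := Ls @^-1` `]q'%:E, +oo[.
have hE : F s E := mLs _ (emeasurable_itv _).
have hBX : forall w, B w -> (X w < q%:E)%E by move=> w; rewrite /B /= in_itv.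
have hEL : forall w, E w -> (q'%:E < Ls w)%E by move=> w; rewrite /E /= in_itv /= andbT.
have mB := FM t0 hB.
have mE := FM s0 hE.
have hEt := Fmono s0 (ltW st) hE.
have hEB : F t (E `&` B) := FI t0 hEt hB.
have mEB := FM t0 hEB.
have hn : forall n : nat, (\int[P]_(w in E `&` B) (pi t w)%:E <=
    (n.+1%:R^-1)%:E * \int[P]_(w in setT) (pi s w)%:E)%E.
  move=> n; set dl := n.+1%:R^-1.
  have dl0 : 0 < dl by rewrite invr_gt0.
  pose g := fun w => (((EFin \o pi t) \_ B) w - dl%:E * (EFin \o pi s) w)%E.
  have int1 : forall A, measurable A -> P.-integrable A ((EFin \o pi t) \_ B).
    move=> A mA; apply: integrableS (_ : P.-integrable setT _) => //.
    by apply/(integrable_mkcond _ mB); exact: pi_intS.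
  have int2 : forall A, measurable A -> P.-integrable A (fun w => (dl%:E * (EFin \o pi s) w)%E).
    by move=> A mA; apply: integrableZl => //; exact: pi_intS.
  have intg : P.-integrable setT g by apply: integrableB => //; [exact: int1|exact: int2].
  have gE : forall A, measurable A -> (\int[P]_(w in A) g w =
      \int[P]_(w in A `&` B) (pi t w)%:E - dl%:E * \int[P]_(w in A) (pi s w)%:E)%E.
    move=> A mA; rewrite /g integralB //; [|exact: int1|exact: int2].
    rewrite -integral_mkcondr integralZl //; exact: pi_intS.
  have [W [hW posW negW]] := sub_hahn (FS s0) (FM s0) (induced_charge intg).
  have hWE : F s (W `&` E) := FI s0 hW hE.
  have hVn : P (W `&` E) = 0%E.
    apply: (Vnull s0 st x0 qq' dl0 hLs hX hB hBX hWE).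
      by move=> w [_]; exact: hEL.
    move=> A hA AWE.
    have h0 : (0 <= \int[P]_(w in A) g w)%E := posW A hA (fun w h => (AWE w h).1).
    move: h0.
    rewrite (gE A (FM s0 hA)).
    have mA := FM s0 hA.
    rewrite sube_ge0 //; apply/orP; left; apply: fin_numM => //.
    apply: integrable_fin_num => //; exact: pi_intS.
  have hA : F s (E `\` W) := FD s0 hE hW.
  have mA := FM s0 hA.
  have hneg := negW (E `\` W) hA (fun w h => h.2).
  have hneg' : (\int[P]_(w in E `\` W) g w <= 0)%E := hneg.
  move: hneg'; rewrite gE // sube_le0 => {}hneg.
  rewrite (ge0_negligible_integral (FM s0 hWE) mEB) //; last 2 first.
  - exact: measurable_int (pi_intS t0 mEB).
  - by move=> w _; rewrite lee_fin ltW // pi_pos.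
  apply: (@le_trans _ _ (\int[P]_(w in (E `\` W) `&` B) (pi t w)%:E)%E).
    apply: ge0_subset_integral => //.
    - exact: measurableD mEB (FM s0 hWE).
    - exact: measurableI _ _ mA mB.
    - exact: measurable_int (pi_intS t0 (measurableI _ _ mA mB)).
    - by move=> w _; rewrite lee_fin ltW // pi_pos.
    - by move=> w [[Ew Bw] nWE]; split => //; split => // Ww; apply: nWE.
  apply: le_trans hneg _; apply: lee_wpmul2l; first by rewrite lee_fin ltW.
  apply: ge0_subset_integral => //.
  - exact: measurable_int (pi_intS s0 measurableT).
  - by move=> w _; rewrite lee_fin ltW // pi_pos.
have hI := integrable_fin_num measurableT (pi_intS s0 measurableT).
have hJ := integrable_fin_num mEB (pi_intS t0 mEB).
have I0 : (0 <= \int[P]_(w in setT) (pi s w)%:E)%E.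
  by apply: integral_ge0 => w _; rewrite lee_fin ltW // pi_pos.
have PEB : P (E `&` B) = 0%E.
  apply: (pos_int0 mEB (f := pi t)).
  - exact: measurable_int (pi_intS t0 mEB).
  - by move=> w _; exact: pi_pos.
  move: hn I0; rewrite -(fineK hI) -(fineK hJ) lee_fin => hn I0.
  rewrite lee_fin; apply: small_le0 I0 _ => n.
  by have := hn n; rewrite -EFinM lee_fin.
exists (E `&` B); split => // w /= /contrapT [h1 h2]; split.
- by rewrite /E /= in_itv /= andbT.
- by rewrite /B /= in_itv.
Qed.

End Main.



Lemma ereal_rat2 (R : realType) (x y : \bar R) : (x < y)%E ->
  exists a b : rat, [/\ (x < (ratr a)%:E)%E, ratr a < ratr b :> R & ((ratr b)%:E < y)%E].
Proof.
move=> xy.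
have [p [p' [hp pp' hp']]] : exists p p' : R, [/\ (x <= p%:E)%E, p < p' & (p'%:E <= y)%E].
  case: x xy => [r| |]; case: y => [u| |] //=.
  - by rewrite lte_fin => ru; exists r, u; split.
  - by move=> _; exists r, (r+1); split => //; [lra | rewrite leey].
  - by move=> _; exists (u-1), u; split => //; [rewrite leNye | lra].
  - by move=> _; exists (0:R), (1:R); split; [exact: leNye | exact: ltr01 | exact: leey].
have [a ha] := rat_in_itvoo pp'.
move: ha; rewrite in_itv /= => /andP[pa ap'].
have [b hb] := rat_in_itvoo ap'.
move: hb; rewrite in_itv /= => /andP[ab bp'].
exists a, b; split => //.
- by apply: le_lt_trans hp _; rewrite lte_fin.
- by apply: lt_le_trans hp'; rewrite lte_fin.
Qed.

Unset Implicit Arguments.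
Theorem proposition5 (R : realType) (d : measure_display) (Omega : measurableType d)
    (P : probability Omega R) (F : R -> set (set Omega)) (pi : R -> Omega -> R)
    (C : R -> R -> Omega -> R) (Lt : R -> Omega -> \bar R) :
  usual_filtration P F ->
  pricing_kernel P F pi ->
  (forall t T, 0 <= t -> t < T -> cond_exp_version P (F t) (pi T) (C t T)) ->
  (forall t, 0 <= t -> long_rate P F pi C t (Lt t)) ->
  forall s t, 0 <= s -> s <= t ->
    \forall w \ae P, (Lt s w <= Lt t w)%E.
Proof.
move=> hF hpk hC hL s t s0 st.
have [<-|st'] := eqVneq s t; first by apply: aeW => w.
have {st} st : s < t by rewrite lt_neqAle st' st.
have t0 : 0 <= t by apply: le_trans (ltW st).
have hLs := hL s s0.
have [St [hSt [_ _ greatest]]] := hL t t0.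
have [Ss [_ [mLs _ _]]] := hLs.
apply: greatest.
  by move=> B mB; apply: (Fmono hF s0 (ltW st)); exact: mLs.
move=> x x0.
case: (hSt x x0) => mX ubX _.
have hX : forall T, t < T -> x <= T ->
    \forall w \ae P, ((exp_rate pi (C t T) t T w)%:E <= St x w)%E.
  by move=> T tT xT; exact: ubX T (conj tT xT).
have key : forall m : nat, \forall w \ae P,
    match @pickle_inv (rat * rat)%type m with
    | Some ab => ratr ab.1 < ratr ab.2 :> R ->
        ~ ((St x w < (ratr ab.1)%:E)%E /\ ((ratr ab.2)%:E < Lt s w)%E)
    | None => True end.
  move=> m; case: (pickle_inv m) => [[a b]|]; last exact: aeW.
  have [ab|ab] := ltP (ratr a) (ratr b : R).
    have := mainq hF hpk hC s0 st x0 ab hLs mX hX.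
    by apply: filterS => w h _; exact: h.
  by apply: aeW => w /=.
have := ae_foralln key.
apply: filterS => w hw.
rewrite leNgt; apply/negP => hlt.
have [a [b [h1 h2 h3]]] := ereal_rat2 hlt.
by have := hw (pickle (a, b)); rewrite pickleK_inv /= => /(_ h2); apply.
Qed.
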